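(* If $\mathcal{C}$ is a properly-splitted hypergraph, then $\psi(\mathcal{C})=\operatorname{conn_h}(\operatorname{Ind}(\mathcal{C}))+2$.
   Context: A hypergraph $\mathcal{C}$ on a finite vertex set $V$ is a family of pairwise incomparable subsets of $V$ (its edges), each of cardinality at least $2$; vertices lying in no edge are allowed. The independence complex $\operatorname{Ind}(\mathcal{C})$ is the simplicial complex on $V$ whose faces are the subsets of $V$ containing no edge of $\mathcal{C}$ (if $V=\emptyset$ it is $\{\emptyset\}$). For an edge $F$: $\mathcal{C}-F$ is the hypergraph on $V$ with edge set $\mathcal{C}\setminus\{F\}$; $N_{\mathcal{C}}(F)=\bigcup\{E\setminus F : E\in\mathcal{C},\ |E\setminus F|=1\}$; and $\mathcal{C}:F$ is the hypergraph on $V\setminus(F\cup N_{\mathcal{C}}(F))$ whose edges are the members of cardinality at least $2$ among the inclusion-minimal members of the family $\{E\setminus F : E\in \mathcal{C}-F\}$. The number $\psi(\mathcal{C})\in\mathbb{Z}_{\ge 0}\cup\{\infty\}$ is defined recursively: $\psi(\mathcal{C})=0$ if $V=\emptyset$; $\psi(\mathcal{C})=\infty$ if $V\neq\emptyset$ and $\mathcal{C}$ has no edges; otherwise $\psi(\mathcal{C})=\max_{F\in\mathcal{C}}\min\{\psi(\mathcal{C}-F),\ \psi(\mathcal{C}:F)+|F|-1\}$. The homological connectivity $\operatorname{conn_h}(\Delta)$ is the largest integer $k$ such that $\tilde H_i(\Delta;\mathbb{Z})=0$ for all $i\le k$ ($\infty$ if all vanish; $\operatorname{conn_h}(\{\emptyset\})=-2$).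 A hypergraph $\mathcal{C}$ is properly-splitted (recursively on the number of edges) if either $\mathcal{C}$ has no edges, or $\mathcal{C}$ has an edge $F$ with $\operatorname{conn_h}(\operatorname{Ind}(\mathcal{C}:F))\ge \operatorname{conn_h}(\operatorname{Ind}(\mathcal{C}))-|F|+1$ such that both $\mathcal{C}-F$ and $\mathcal{C}:F$ are properly-splitted. *)

(* Defs.v *)
From mathcomp Require Import all_boot all_order all_algebra.
From Stdlib Require Import ClassicalEpsilon.
Set Implicit Arguments. Unset Strict Implicit. Unset Printing Implicit Defensive.
Import Order.TTheory GRing.Theory Num.Theory.

(* Extended integers: [Some z] is the integer z, [None] is +infinity. *)
Definition xint := option int.

Definition xmin (a b : xint) : xint :=
  match a, b with
  | None, _ => b
  | _, None => a
  | Some x, Some y => Some (Order.min x y)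
  end.

Definition xmax (a b : xint) : xint :=
  match a, b with
  | None, _ => None
  | _, None => None
  | Some x, Some y => Some (Order.max x y)
  end.

Definition xaddz (a : xint) (k : int) : xint := omap (fun x => (x + k)%R) a.

Definition xle (a b : xint) : bool :=
  match b with
  | None => true
  | Some y => match a with None => false | Some x => (x <= y)%R end
  end.

Section Hyper.
Variable T : finType.

Definition is_hypergraph (V : {set T}) (C : {set {set T}}) : Prop :=
  (forall E, E \in C -> E \subset V /\ 2 <= #|E|) /\
  (forall E E', E \in C -> E' \in C -> E \subset E' -> E = E').

Definition Ind (V : {set T}) (C : {set {set T}}) : {set {set T}} :=
  [set A : {set T} | (A \subset V) && [forall E in C, ~~ (E \subset A)]].

Definition hdel (C : {set {set T}}) (F : {set T}) : {set {set T}} := C :\ F.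

Definition hnbhd (C : {set {set T}}) (F : {set T}) : {set T} :=
  \bigcup_(E in C | #|E :\: F| == 1) (E :\: F).

Definition hcolonV (V : {set T}) (C : {set {set T}}) (F : {set T}) : {set T} :=
  V :\: (F :|: hnbhd C F).

Definition hcolonC (C : {set {set T}}) (F : {set T}) : {set {set T}} :=
  let Fam := [set E :\: F | E in C :\ F] in
  [set D in Fam | [forall D' in Fam, (D' \subset D) ==> (D' == D)] && (2 <= #|D|)].

(* psi, computed with fuel; at top level the fuel is the number of edges,
   which suffices since both C - F and C : F have fewer edges than C. *)
Fixpoint psi_fuel (n : nat) (V : {set T}) (C : {set {set T}}) : xint :=
  if V == set0 then Some 0%R
  else if C == set0 then None
  else match n with
  | 0 => None (* unreachable with sufficient fuel *)
  | n'.+1 =>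
      let g F := xmin (psi_fuel n' V (hdel C F))
                      (xaddz (psi_fuel n' (hcolonV V C F) (hcolonC C F))
                             (#|F|%:Z - 1)%R) in
      match enum C with
      | [::] => None
      | F0 :: Fs => foldr (fun F acc => xmax (g F) acc) (g F0) Fs
      end
  end.

Definition psi (V : {set T}) (C : {set {set T}}) : xint := psi_fuel #|C| V C.

(* An oriented simplex is ordered by [enum_rank]. A k-chain (k = dimension+1
   = number of vertices of the simplices) is a function c : {set T} -> int
   supported on faces of D with exactly k vertices; k = 0 gives the
   augmentation degree -1 of reduced homology. *)
Definition is_chain (D : {set {set T}}) (k : nat) (c : {set T} -> int) : Prop :=
  forall s, c s != 0%R -> s \in D /\ #|s| = k.

(* sign (-1)^j where j is the position of v in the ordered simplex v |: tau *)
Definition bsign (v : T) (tau : {set T}) : int :=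
  ((-1) ^+ #|[set u in tau | (enum_rank u < enum_rank v)%N]|)%R.

Definition bd (c : {set T} -> int) (tau : {set T}) : int :=
  (\sum_(v | v \notin tau) c (v |: tau) * bsign v tau)%R.

(* \tilde H_{k-1}(D; Z) = 0 : every (k-1)-dim cycle is a boundary *)
Definition rhom_vanish (D : {set {set T}}) (k : nat) : Prop :=
  forall c, is_chain D k c -> (forall tau, bd c tau = 0%R) ->
  exists d, is_chain D k.+1 d /\ forall s, bd d s = c s.

Definition rhom_vanishb (D : {set {set T}}) (k : nat) : bool :=
  if excluded_middle_informative (rhom_vanish D k) then true else false.

(* conn_h(D): largest integer m with \tilde H_i = 0 for all i <= m
   (None = infinity). Groups in degrees i <= -2 are zero; if k0 is the least
   k with \tilde H_{k-1} <> 0, then conn_h = k0 - 2. *)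
Definition conn_h (D : {set {set T}}) : xint :=
  match excluded_middle_informative (exists k, ~~ rhom_vanishb D k) with
  | left H => Some ((ex_minn H)%:Z - 2)%R
  | right _ => None
  end.

Inductive properly_splitted : {set T} -> {set {set T}} -> Prop :=
  | PS_empty V : properly_splitted V set0
  | PS_split (V : {set T}) (C : {set {set T}}) (F : {set T}) : F \in C ->
      xle (xaddz (conn_h (Ind V C)) (1 - #|F|%:Z)%R)
          (conn_h (Ind (hcolonV V C F) (hcolonC C F))) ->
      properly_splitted V (hdel C F) ->
      properly_splitted (hcolonV V C F) (hcolonC C F) ->
      properly_splitted V C.

End Hyper.

(* Main.v *)
Require Import Defs.
From mathcomp Require Import all_boot all_order all_algebra.
From mathcomp Require Import zify ring.
From Stdlib Require Import ClassicalEpsilon.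
Set Implicit Arguments. Unset Strict Implicit. Unset Printing Implicit Defensive.
Import Order.TTheory GRing.Theory Num.Theory.

Section Hom.
Variable T : finType.
Implicit Types (c d e : {set T} -> int) (t A B : {set T}).

Lemma bsign_sq (v : T) t : (bsign v t * bsign v t = 1)%R.
Proof. by rewrite /bsign -exprD -signr_odd addnn odd_double. Qed.

Lemma bsignU1 (v u : T) t : u \notin t ->
  bsign v (u |: t) = ((if (enum_rank u < enum_rank v)%N then -1 else 1) * bsign v t)%R.
Proof.
move=> ut; rewrite /bsign; case: ifP => h.
  have -> : [set x in u |: t | (enum_rank x < enum_rank v)%N] =
            u |: [set x in t | (enum_rank x < enum_rank v)%N].
    by apply/setP => x; rewrite !inE; case: eqP => [->|] //=; rewrite h.
  by rewrite cardsU1 inE (negbTE ut) /= exprS.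
have -> : [set x in u |: t | (enum_rank x < enum_rank v)%N] =
          [set x in t | (enum_rank x < enum_rank v)%N].
  by apply/setP => x; rewrite !inE; case: eqP => [->|] //=; rewrite h (negbTE ut).
by rewrite mul1r.
Qed.

Lemma bsign_union (v : T) A B : [disjoint A & B] ->
  bsign v (A :|: B) = (bsign v A * bsign v B)%R.
Proof.
move=> dis; rewrite /bsign -exprD.
have -> : [set x in A :|: B | (enum_rank x < enum_rank v)%N] =
  [set x in A | (enum_rank x < enum_rank v)%N] :|: [set x in B | (enum_rank x < enum_rank v)%N].
  by apply/setP => x; rewrite !inE andb_orl.
rewrite cardsU.
have -> : [set x in A | (enum_rank x < enum_rank v)%N] :&: [set x in B | (enum_rank x < enum_rank v)%N] = set0.
  apply/setP => x; rewrite !inE; case xA: (x \in A); case xB: (x \in B); rewrite ?andbF //=.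
  by move: dis => /disjoint_setI0 /setP /(_ x); rewrite !inE xA xB.
by rewrite cards0 subn0.
Qed.

Lemma bd_ext c d t : (forall s, c s = d s) -> bd c t = bd d t.
Proof. by move=> h; apply: eq_bigr => v _; rewrite h. Qed.

Lemma bd_sub c d t : bd (fun s => c s - d s)%R t = (bd c t - bd d t)%R.
Proof. by rewrite /bd -sumrB; apply: eq_bigr => v _; rewrite mulrBl. Qed.

Lemma bd_add c d t : bd (fun s => c s + d s)%R t = (bd c t + bd d t)%R.
Proof. by rewrite /bd -big_split; apply: eq_bigr => v _; rewrite mulrDl. Qed.

Lemma bd0 t : bd (fun _ => 0%R) t = 0%R.
Proof. by rewrite /bd big1 // => v _; rewrite mul0r. Qed.

Lemma rank_neq (v w : T) : v != w ->
  (enum_rank v < enum_rank w)%N = ~~ (enum_rank w < enum_rank v)%N.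
Proof.
move=> vw; have ne : (enum_rank v : nat) != enum_rank w.
  by apply: contra vw => /eqP /val_inj /enum_rank_inj ->.
by rewrite -leqNgt ltn_neqAle ne.
Qed.

Lemma bdbd c t : bd (bd c) t = 0%R.
Proof.
pose f v w := (if (v \notin t) && (w \notin t) && (w != v) then
   c (w |: (v |: t)) * bsign w (v |: t) * bsign v t else 0)%R.
have E : (bd (bd c) t = \sum_v \sum_w f v w)%R.
  rewrite /bd big_mkcond; apply: eq_bigr => v _ /=; rewrite mulr_suml big_mkcond.
  case: ifP => vt.
    apply: eq_bigr => w _; rewrite /f vt in_setU1 negb_or /= eq_sym.
    by rewrite andbC.
  by symmetry; apply: big1 => w _; rewrite /f vt.
have anti v w : f v w = (- f w v)%R.
  rewrite /f; case vt: (v \in t); case wt: (w \in t); rewrite /= ?oppr0 //.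
  case: (boolP (w != v)) => wv /=; last by rewrite eq_sym (negbTE wv) oppr0.
  rewrite eq_sym wv setUCA !bsignU1 ?vt ?wt // rank_neq //.
  case: (enum_rank w < enum_rank v)%N => /=; ring.
  by rewrite eq_sym.
rewrite E.
have E2 : (\sum_v \sum_w f v w = - \sum_v \sum_w f v w)%R.
  rewrite [LHS]exchange_big -sumrN; apply: eq_bigr => w _; rewrite -sumrN.
  apply: eq_bigr => v _; exact: anti.
move: E2; set S := (\sum_v \sum_w f v w)%R; lia.
Qed.
End Hom.


Definition delF (T : finType) (K : {set {set T}}) (F : {set T}) :=
  [set s in K | ~~ (F \subset s)].
Definition lkF (T : finType) (K : {set {set T}}) (F : {set T}) :=
  [set t : {set T} | [disjoint t & F] && (F :|: t \in K)].

Section Pair.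
Variable T : finType.
Variables (K : {set {set T}}) (F : {set T}).
Hypothesis hK : forall s t : {set T}, s \in K -> t \subset s -> t \in K.
Implicit Types (c d e x y : {set T} -> int) (t s A B : {set T}).

Definition eps t := (\prod_(u in t) bsign u F)%R.
Definition proj d t := if [disjoint t & F] then (eps t * d (F :|: t))%R else 0%R.
Definition lift e s := if F \subset s then (eps (s :\: F) * e (s :\: F))%R else 0%R.

Lemma eps_sq t : (eps t * eps t = 1)%R.
Proof. by rewrite /eps -big_split /=; apply: big1 => u _; rewrite bsign_sq. Qed.

Lemma eps_neq0 t : eps t != 0%R.
Proof. by apply/eqP => h; move: (eps_sq t); rewrite h mul0r. Qed.

Lemma epsU1 v t : v \notin t -> eps (v |: t) = (bsign v F * eps t)%R.
Proof. by move=> vt; rewrite /eps big_setU1. Qed.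

Lemma card_disjU A B : [disjoint A & B] -> #|A :|: B| = #|A| + #|B|.
Proof. by move=> /disjoint_setI0 h; rewrite cardsU h cards0 subn0. Qed.

Lemma setUDK A B : A \subset B -> A :|: (B :\: A) = B.
Proof.
move=> /subsetP h; apply/setP => x; rewrite !inE.
by case xA: (x \in A) => //=; rewrite (h _ xA).
Qed.

Lemma disjD A B : [disjoint B :\: A & A].
Proof. by rewrite -setI_eq0; apply/eqP/setP => x; rewrite !inE; case: (x \in A); rewrite ?andbF. Qed.

Lemma setUKD A B : [disjoint B & A] -> (A :|: B) :\: A = B.
Proof.
move=> /disjoint_setI0 /setP h; apply/setP => x; move: (h x); rewrite !inE.
by case: (x \in A); case: (x \in B).
Qed.

Lemma disjU1 v t : [disjoint v |: t & F] = (v \notin F) && [disjoint t & F].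
Proof.
rewrite -!setI_eq0; apply/eqP/andP.
  move=> /setP h; split.
    by apply/negP => vF; move: (h v); rewrite !inE eqxx vF.
  apply/eqP/setP => x; move: (h x); rewrite !inE.
  by case: (x \in t); case: (x \in F); rewrite ?orbT ?andbF.
case=> vF /eqP /setP h; apply/setP => x; move: (h x); rewrite !inE.
by case: eqP => [->|] /=; rewrite ?(negbTE vF) ?andbF.
Qed.

Lemma bd_proj d t : bd (proj d) t = proj (bd d) t.
Proof.
rewrite /proj /bd; case: ifP => dis.
  rewrite big_mkcond mulr_sumr [in RHS]big_mkcond; apply: eq_bigr => v _ /=.
  case vt: (v \in t) => /=.
    by rewrite in_setU vt orbT.
  rewrite disjU1 dis andbT in_setU vt orbF.
  case vF: (v \in F) => /=; first by rewrite mul0r.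
  rewrite (epsU1 (negbT vt)) setUCA bsign_union; last by rewrite disjoint_sym.
  ring.
rewrite big1 // => v vt; by rewrite disjU1 dis andbF mul0r.
Qed.

Lemma proj_lift e t : (forall t, e t != 0%R -> [disjoint t & F]) -> proj (lift e) t = e t.
Proof.
move=> he; rewrite /proj /lift; case: ifP => dis.
  by rewrite subsetUl setUKD // mulrA eps_sq mul1r.
by case: (eqVneq (e t) 0%R) => // /he; rewrite dis.
Qed.

Lemma proj_sub x y t : proj (fun s => x s - y s)%R t = (proj x t - proj y t)%R.
Proof. by rewrite /proj; case: ifP => _; rewrite ?mulrBr ?subr0. Qed.

Lemma proj_size k d t : is_chain K k d -> proj d t != 0%R ->
  [disjoint t & F] /\ F :|: t \in K /\ #|F| + #|t| = k.
Proof.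
move=> ch; rewrite /proj; case: ifP => dis; last by rewrite eqxx.
rewrite mulf_eq0 negb_or => /andP [_ /ch [inK sz]].
by split => //; split => //; rewrite -card_disjU // disjoint_sym.
Qed.

Lemma chain_proj k d : is_chain K k d -> is_chain (lkF K F) (k - #|F|) (proj d).
Proof.
move=> ch t /(proj_size ch) [dis [inK sz]]; split; first by rewrite inE dis inK.
lia.
Qed.

Lemma chain_lift m e : is_chain (lkF K F) m e -> is_chain K (m + #|F|) (lift e).
Proof.
move=> ch s; rewrite /lift; case: ifP => sub; last by rewrite eqxx.
rewrite mulf_eq0 negb_or => /andP [_ /ch []]; rewrite inE => /andP [dis].
rewrite setUDK // => inK sz; split => //.
by rewrite -(setUDK sub) card_disjU; [lia | rewrite disjoint_sym disjD].
Qed.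

Lemma chain_bd k d : is_chain K k.+1 d -> is_chain K k (bd d).
Proof.
move=> ch t; case: (boolP [exists v, (v \notin t) && (d (v |: t) != 0%R)]).
  move=> /existsP [v /andP [vt /ch [inK sz]]] _; split.
    by apply: hK inK _; apply: subsetUr.
  by move: sz; rewrite cardsU1 vt add1n => [[]].
move=> /existsPn h; rewrite /bd big1 ?eqxx // => v vt.
by move: (h v); rewrite vt /= negbK => /eqP ->; rewrite mul0r.
Qed.

Lemma chain_sub k x y : is_chain K k x -> is_chain K k y -> is_chain K k (fun s => x s - y s)%R.
Proof.
move=> cx cy s; case: (eqVneq (x s) 0%R) => [-> | /cx //].
by rewrite sub0r oppr_eq0 => /cy.
Qed.

Lemma chain_add k x y : is_chain K k x -> is_chain K k y -> is_chain K k (fun s => x s + y s)%R.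
Proof.
move=> cx cy s; case: (eqVneq (x s) 0%R) => [-> | /cx //].
by rewrite add0r => /cy.
Qed.

Lemma chain_K0 k x : is_chain K k x -> (forall t, proj x t = 0%R) -> is_chain (delF K F) k x.
Proof.
move=> ch hp s xs; have [inK sz] := ch s xs; split => //.
rewrite inE inK /=; apply/negP => sub.
move: (hp (s :\: F)); rewrite /proj disjD setUDK // => /eqP.
by rewrite mulf_eq0 (negbTE (eps_neq0 _)) (negbTE xs).
Qed.

Lemma chain_K0K k x : is_chain (delF K F) k x -> is_chain K k x.
Proof. by move=> ch s /ch []; rewrite inE => /andP []. Qed.

Lemma proj_K0 k x t : is_chain (delF K F) k x -> proj x t = 0%R.
Proof.
move=> ch; rewrite /proj; case: ifP => // dis.
case: (eqVneq (x (F :|: t)) 0%R) => [->|/ch []]; first by rewrite mulr0.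
by rewrite inE subsetUl andbF.
Qed.

Lemma proj_ext x y t : (forall s, x s = y s) -> proj x t = proj y t.
Proof. by move=> h; rewrite /proj h. Qed.

Lemma lift0 k : is_chain K k (lift (fun _ => 0%R)).
Proof. by move=> s; rewrite /lift; case: ifP => _; rewrite ?mulr0 eqxx. Qed.

Lemma pairI n : rhom_vanish K n ->
  (#|F| <= n.+1 -> rhom_vanish (lkF K F) (n.+1 - #|F|)) ->
  rhom_vanish (delF K F) n.
Proof.
move=> vK vL c cc cyc.
have [d [cd bdd]] := vK c (chain_K0K cc) cyc.
have [e [de [ce be]]] : exists e, (forall t, e t != 0%R -> [disjoint t & F]) /\
    is_chain K n.+2 (lift e) /\ forall s, bd e s = proj d s.
  case: (leqP #|F| n.+1) => hf.
    have cp := chain_proj cd.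
    have cyp : forall t, bd (proj d) t = 0%R.
      by move=> t; rewrite bd_proj (proj_ext _ bdd) (proj_K0 _ cc).
    have [e [ce' be]] := vL hf (proj d) cp cyp.
    exists e; split; first by move=> t /ce' []; rewrite inE => /andP [].
    split => //; have -> : n.+2 = (n.+1 - #|F|).+1 + #|F| by lia.
    exact: chain_lift.
  exists (fun _ => 0%R); split; first by move=> t; rewrite eqxx.
  split; first exact: lift0.
  move=> s; rewrite bd0; case: (eqVneq (proj d s) 0%R) => // /(proj_size cd).
  move=> [_ [_ sz]]; lia.
exists (fun s => d s - bd (lift e) s)%R; split.
  apply: chain_K0; first exact: chain_sub cd (chain_bd ce).
  move=> t; rewrite proj_sub -bd_proj (bd_ext _ (fun s => proj_lift s de)) be.
  by rewrite subrr.
by move=> s; rewrite bd_sub bdbd bdd subr0.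
Qed.

Lemma pairII n : rhom_vanish (delF K F) n ->
  (#|F| <= n -> rhom_vanish (lkF K F) (n - #|F|)) ->
  rhom_vanish K n.
Proof.
move=> vK0 vL c cc cyc.
have [e [de [ce be]]] : exists e, (forall t, e t != 0%R -> [disjoint t & F]) /\
    is_chain K n.+1 (lift e) /\ forall s, bd e s = proj c s.
  case: (leqP #|F| n) => hf.
    have cp := chain_proj cc.
    have cyp : forall t, bd (proj c) t = 0%R.
      by move=> t; rewrite bd_proj /proj cyc; case: ifP; rewrite ?mulr0.
    have [e [ce' be]] := vL hf (proj c) cp cyp.
    exists e; split; first by move=> t /ce' []; rewrite inE => /andP [].
    split => //; have -> : n.+1 = (n - #|F|).+1 + #|F| by lia.
    exact: chain_lift.
  exists (fun _ => 0%R); split; first by move=> t; rewrite eqxx.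
  split; first exact: lift0.
  move=> s; rewrite bd0; case: (eqVneq (proj c s) 0%R) => // /(proj_size cc).
  move=> [_ [_ sz]]; lia.
set x := (fun s => c s - bd (lift e) s)%R.
have cx : is_chain (delF K F) n x.
  apply: chain_K0; first exact: chain_sub cc (chain_bd ce).
  move=> t; rewrite proj_sub -bd_proj (bd_ext _ (fun s => proj_lift s de)) be.
  by rewrite subrr.
have [g [cg bg]] := vK0 x cx (fun t => ltac:(by rewrite bd_sub bdbd cyc subr0)).
exists (fun s => g s + lift e s)%R; split.
  exact: chain_add (chain_K0K cg) ce.
by move=> s; rewrite bd_add bg /x subrK.
Qed.
End Pair.


Section Cone.
Variable T : finType.
Implicit Types (c d : {set T} -> int) (t s V : {set T}).

Lemma inInd0 V s : (s \in Ind V set0) = (s \subset V).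
Proof.
rewrite inE; case: (s \subset V) => //=; apply/forall_inP => E; by rewrite inE.
Qed.

Lemma simplex_vanish V n : V != set0 -> rhom_vanish (Ind V set0) n.
Proof.
case/set0Pn => v0 v0V.
case: (arg_minnP (fun u => (enum_rank u : nat)) v0V) => v vV vmin.
have {}vV : v \in V := vV.
have sign1 t : t \subset V -> v \notin t -> bsign v t = 1%R.
  move=> /subsetP tV vt; rewrite /bsign.
  have -> : [set x in t | (enum_rank x < enum_rank v)%N] = set0.
    apply/setP => x; rewrite !inE; apply/negbTE; apply/negP => /andP [xt].
    by rewrite ltnNge vmin //; apply: tV.
  by rewrite cards0.
have rk w : w \in V -> w != v -> (enum_rank v < enum_rank w)%N.
  move=> wV wv; rewrite ltn_neqAle (vmin w wV) andbT.
  by apply: contra wv => /eqP /val_inj /enum_rank_inj ->.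
move=> c cc cyc.
exists (fun s => if v \in s then c (s :\ v) else 0%R); split.
  move=> s; case: ifP => vs // /cc []; rewrite inInd0 => sub sz; split.
    by rewrite inInd0 -(setD1K vs) subUset sub1set vV.
  by rewrite (cardsD1 v s) vs sz.
move=> t; case: (boolP (v \in t)) => vt.
  set t' := t :\ v.
  have tE : t = v |: t' by rewrite setD1K.
  have vt' : v \notin t' by rewrite !inE eqxx.
  have E1 : bd (fun s => if v \in s then c (s :\ v) else 0%R) t =
     (- \sum_(w | w \notin t) c (w |: t') * bsign w t')%R.
    rewrite /bd -sumrN; apply: eq_bigr => w wt.
    have wv : w != v by apply: contraNneq wt => ->.
    rewrite in_setU1 vt orbT.
    have -> : (w |: t) :\ v = w |: t'.
      apply/setP => x; rewrite !inE; case: (eqVneq x v) => [->|] /=; last by [].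
      by rewrite eq_sym (negbTE wv).
    rewrite tE bsignU1 //.
    case: (eqVneq (c (w |: t')) 0%R) => [->|/cc []]; first by rewrite !mul0r oppr0.
    rewrite inInd0 subUset sub1set => /andP [wV _] _.
    by rewrite rk // mulN1r mulrN.
  rewrite E1; have := cyc t'; rewrite /bd (bigD1 v) //= -tE.
  have -> : (\sum_(i | (i \notin t') && (i != v)) c (i |: t') * bsign i t')%R =
            (\sum_(w | w \notin t) c (w |: t') * bsign w t')%R.
    by apply: eq_bigl => w; rewrite tE in_setU1 negb_or andbC.
  case: (eqVneq (c t) 0%R) => [->|/cc []].
    by rewrite mul0r add0r => ->; rewrite oppr0.
  rewrite inInd0 => tV _; rewrite sign1 ?mulr1; last by rewrite vt'.
    by move/eqP; rewrite addr_eq0 => /eqP ->.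
  exact: subset_trans (subD1set t v) tV.
rewrite /bd (bigD1 v) //= in_setU1 eqxx /= setU1K //.
rewrite big1 ?addr0.
  case: (eqVneq (c t) 0%R) => [->|/cc []]; first by rewrite mul0r.
  by rewrite inInd0 => tV _; rewrite sign1 ?mulr1.
move=> w /andP [wt wv]; rewrite in_setU1 eq_sym (negbTE wv) (negbTE vt) /=.
by rewrite mul0r.
Qed.

Lemma empty_nvanish : ~ rhom_vanish (Ind set0 (set0 : {set {set T}})) 0.
Proof.
move=> h.
pose c := (fun s : {set T} => if s == set0 then 1%R else 0%R : int).
have cc : is_chain (Ind set0 set0) 0 c.
  move=> s; rewrite /c; case: (eqVneq s set0) => [-> _|]; last by rewrite eqxx.
  by split; [rewrite inInd0 sub0set | rewrite cards0].
have cyc : forall t, bd c t = 0%R.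
  move=> t; rewrite /bd big1 // => w _.
  have -> : c (w |: t) = 0%R.
    rewrite /c; case: eqP => // h0; exfalso.
    by move: (setU11 w t); rewrite h0 inE.
  by rewrite mul0r.
have [d [cd bdd]] := h c cc cyc.
move: (bdd set0); rewrite /c eqxx /bd big1 // => w _.
case: (eqVneq (d (w |: set0)) 0%R) => [->|/cd []]; first by rewrite mul0r.
rewrite inInd0 subset0 => /eqP h0; exfalso.
by move: (setU11 w set0); rewrite h0 inE.
Qed.
End Cone.


Definition bnd (x : xint) (n : nat) : bool :=
  if x is Some m then (n%:Z <= m + 1)%R else true.

Section Conn.
Variable T : finType.
Implicit Types (D : {set {set T}}).

Lemma vanishbP D k : reflect (rhom_vanish D k) (rhom_vanishb D k).
Proof. by rewrite /rhom_vanishb; case: excluded_middle_informative => h; constructor. Qed.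

Lemma conn_geP D x : xle x (conn_h D) <-> (forall n, bnd x n -> rhom_vanish D n).
Proof.
rewrite /conn_h; case: excluded_middle_informative => [H|H].
  case: ex_minnP => k0 /vanishbP nv0 kmin.
  case: x => [m|] /=; split.
  - move=> le n hn; apply/vanishbP; apply: contraT => nv.
    have := kmin n nv; lia.
  - move=> h; apply: contraT; rewrite -ltNge => lt.
    by exfalso; apply: nv0; apply: h; lia.
  - by [].
  - by move=> h; exfalso; apply: nv0; apply: h.
split => // _ n _; apply/vanishbP; apply: contraT => nv.
by exfalso; apply: H; exists n.
Qed.

Lemma conn_le D k : ~ rhom_vanish D k -> xle (conn_h D) (Some (k%:Z - 2)%R).
Proof.
move=> nv; rewrite /conn_h; case: excluded_middle_informative => [H|H].
  case: ex_minnP => k0 _ kmin /=.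
  have : (k0 <= k)%N by apply: kmin; apply/vanishbP.
  lia.
by exfalso; apply: H; exists k; apply/vanishbP.
Qed.

Lemma conn_ge2 D : xle (Some (-2)%R) (conn_h D).
Proof. by apply/conn_geP => n /=; lia. Qed.

Lemma xle_refl (x : xint) : xle x x.
Proof. by case: x => //= m. Qed.
End Conn.

Section PairX.
Variable T : finType.
Variables (K : {set {set T}}) (F : {set T}).
Hypothesis hK : forall s t : {set T}, s \in K -> t \subset s -> t \in K.

Lemma pairIx : xle (xmin (conn_h K) (xaddz (conn_h (lkF K F)) (#|F|%:Z - 1)%R))
                   (conn_h (delF K F)).
Proof.
apply/conn_geP => n hn; apply: pairI => //.
  apply: (proj1 (conn_geP K (conn_h K)) (xle_refl _)).
  move: hn; case: (conn_h K) => [a|] //=; case: (conn_h (lkF K F)) => [b|] //=; lia.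
move=> hf; apply: (proj1 (conn_geP _ (conn_h (lkF K F))) (xle_refl _)).
move: hn; case: (conn_h K) => [a|] //=; case: (conn_h (lkF K F)) => [b|] //=; lia.
Qed.

Lemma pairIIx : xle (xmin (conn_h (delF K F)) (xaddz (conn_h (lkF K F)) (#|F|%:Z)%R))
                   (conn_h K).
Proof.
apply/conn_geP => n hn; apply: pairII => //.
  apply: (proj1 (conn_geP _ (conn_h (delF K F))) (xle_refl _)).
  move: hn; case: (conn_h (delF K F)) => [a|] //=; case: (conn_h (lkF K F)) => [b|] //=; lia.
move=> hf; apply: (proj1 (conn_geP _ (conn_h (lkF K F))) (xle_refl _)).
move: hn; case: (conn_h (delF K F)) => [a|] //=; case: (conn_h (lkF K F)) => [b|] //=; lia.
Qed.
End PairX.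


Section Comb.
Variable T : finType.
Implicit Types (V F E D t s : {set T}) (C : {set {set T}}).

Definition fam C F := [set E :\: F | E in C :\ F].

Lemma hcolonCE C F D : (D \in hcolonC C F) =
  [&& D \in fam C F, [forall D' in fam C F, (D' \subset D) ==> (D' == D)] & 2 <= #|D|].
Proof. by rewrite /hcolonC inE. Qed.

Lemma famP C F D : reflect (exists2 E, E \in C :\ F & D = E :\: F) (D \in fam C F).
Proof. exact: imsetP. Qed.

Lemma hnbhdP C F x : reflect (exists2 E, (E \in C) && (#|E :\: F| == 1) & x \in E :\: F)
  (x \in hnbhd C F).
Proof. exact: bigcupP. Qed.

Lemma downInd V C s t : s \in Ind V C -> t \subset s -> t \in Ind V C.
Proof.
rewrite !inE => /andP [sV /forall_inP h] ts; rewrite (subset_trans ts sV) /=.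
apply/forall_inP => E EC; apply: contra (h E EC) => Et; exact: subset_trans Et ts.
Qed.

Lemma Ind_del V C F : F \in C -> Ind V C = delF (Ind V (C :\ F)) F.
Proof.
move=> FC; apply/setP => s; rewrite !inE; case: (s \subset V) => //=.
apply/forall_inP/andP.
  move=> h; split; last exact: h.
  by apply/forall_inP => E; rewrite !inE => /andP [_ EC]; apply: h.
move=> [/forall_inP h1 h2] E EC; case: (eqVneq E F) => [->//|EF].
by apply: h1; rewrite !inE EF.
Qed.

Lemma hyp_del V C F : is_hypergraph V C -> is_hypergraph V (hdel C F).
Proof.
move=> [h1 h2]; split.
  by move=> E; rewrite !inE => /andP [_ /h1].
by move=> E E'; rewrite !inE => /andP [_ EC] /andP [_ E'C]; apply: h2.
Qed.

Section H.
Variables (V : {set T}) (C : {set {set T}}) (F : {set T}).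
Hypothesis hyp : is_hypergraph V C.
Hypothesis FC : F \in C.

Lemma famN0 D : D \in fam C F -> D != set0.
Proof.
case/famP => E; rewrite !inE => /andP [EF EC] ->; rewrite setD_eq0.
apply: contra EF => sub; apply/eqP; exact: hyp.2 E F EC FC sub.
Qed.

Lemma fam_min E : E \in C :\ F -> exists D, [/\ D \in fam C F, D \subset E :\: F &
   forall D', D' \in fam C F -> D' \subset D -> D' = D].
Proof.
move=> EC.
have EF : (E :\: F) \in [set D in fam C F | D \subset E :\: F].
  by rewrite inE subxx andbT; apply/famP; exists E.
case: (arg_minnP (fun D => #|D|) EF) => D DP Dmin.
have : D \in [set D in fam C F | D \subset E :\: F] := DP.
rewrite inE => /andP [Df DE]; exists D; split => // D' D'f D'D.
apply/eqP; rewrite eqEcard D'D /=; apply: Dmin.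
suff : D' \in [set D in fam C F | D \subset E :\: F] by [].
by rewrite inE D'f (subset_trans D'D DE).
Qed.

Lemma single_N x E : E \in C -> #|E :\: F| == 1 -> x \in E :\: F ->
  E :\: F = [set x] /\ E \in C :\ F.
Proof.
move=> EC /cards1P [y Ey] xE; move: xE; rewrite Ey inE => /eqP ->; split => //.
rewrite !inE EC andbT; apply/negP => /eqP EF.
by move: Ey => /setP /(_ y); rewrite EF setDv !inE eqxx.
Qed.

Lemma hyp_colon : is_hypergraph (hcolonV V C F) (hcolonC C F).
Proof.
split.
  move=> D; rewrite hcolonCE => /and3P [Df /forall_inP Dmin D2]; split => //.
  case/famP: (Df) => E; rewrite !inE => /andP [EF EC] DE.
  apply/subsetP => x xD; rewrite !inE.
  have xV : x \in V by move: xD; rewrite DE inE => /andP [_]; apply/subsetP; exact: (hyp.1 E EC).1.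
  have xF : x \notin F by move: xD; rewrite DE inE => /andP [].
  rewrite xV negb_or (negbTE xF) andbT /=; apply/negP => /hnbhdP [E' /andP [E'C c1] xE'].
  have [E'x E'CF] := single_N E'C c1 xE'.
  have : [set x] == D.
    apply: (implyP (Dmin _ _)); first by apply/famP; exists E' => //; rewrite E'x.
    by rewrite sub1set.
  by move=> /eqP h; move: D2; rewrite -h cards1.
move=> D D'; rewrite !hcolonCE => /and3P [Df _ _] /and3P [_ /forall_inP D'min _] DD'.
by apply/eqP; apply: (implyP (D'min _ Df)).
Qed.

Lemma Ind_colon : Ind (hcolonV V C F) (hcolonC C F) = lkF (Ind V (C :\ F)) F.
Proof.
have FV : F \subset V by exact: (hyp.1 F FC).1.
apply/setP => t; rewrite !inE; apply/idP/idP.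
  move=> /andP [tsub /forall_inP hno].
  have tV : t \subset V by apply: subset_trans tsub (subsetDl _ _).
  have dis : [disjoint t & F].
    rewrite -setI_eq0; apply/eqP/setP => x; rewrite !inE.
    case xt: (x \in t) => //=; apply/negbTE.
    by move/subsetP: tsub => /(_ x xt); rewrite !inE => /andP [/norP [? _] _].
  rewrite dis /= subUset FV tV /=; apply/forall_inP => E ECF; rewrite -subDset.
  apply/negP => Et.
  have [D [Df DE Dmin]] := fam_min ECF.
  have Dt : D \subset t := subset_trans DE Et.
  case: (leqP 2 #|D|) => D2.
    have HD : D \in hcolonC C F.
      rewrite hcolonCE Df D2 andbT; apply/forall_inP => D' D'f.
      by apply/implyP => /(Dmin _ D'f) ->.
    by move: (hno D HD); rewrite Dt.
  have : #|D| == 1.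
    have := famN0 Df; rewrite -card_gt0; lia.
  move=> /cards1P [x Dx].
  case/famP: (Df) => E'; rewrite !inE => /andP [_ E'C] DE'.
  move/subsetP: tsub => /(_ x); rewrite -sub1set -Dx Dt => /(_ isT).
  rewrite /hcolonV !inE negb_or => /andP [/andP [_ /negP nN] _]; apply: nN; apply/hnbhdP; exists E'.
    by rewrite E'C -DE' Dx cards1.
  by rewrite -DE' Dx set11.
move=> /andP [dis /andP [FtV /forall_inP hE]].
apply/andP; split.
  apply/subsetP => x xt; rewrite !inE.
  have xV : x \in V by apply: (subsetP FtV); rewrite inE xt orbT.
  have xF : x \notin F.
    by apply/negP => xF; move: dis; rewrite -setI_eq0 => /eqP /setP /(_ x); rewrite !inE xt xF.
  rewrite xV negb_or (negbTE xF) andbT /=; apply/negP => /hnbhdP [E /andP [EC c1] xE].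
  have [Ex ECF] := single_N EC c1 xE.
  by move: (hE E ECF); rewrite -subDset Ex sub1set xt.
apply/forall_inP => D; rewrite hcolonCE => /and3P [Df _ _].
case/famP: Df => E ECF ->; rewrite subDset; exact: hE.
Qed.

Lemma card_del : #|C :\ F| < #|C|.
Proof. by rewrite (cardsD1 F C) FC. Qed.

Lemma card_colon : #|hcolonC C F| < #|C|.
Proof.
apply: leq_ltn_trans card_del.
apply: (@leq_trans #|fam C F|); last exact: leq_imset_card.
by apply: subset_leq_card; apply/subsetP => D; rewrite hcolonCE => /and3P [].
Qed.
End H.

Lemma hyp_V0 C : is_hypergraph set0 C -> C = set0.
Proof.
move=> [h _]; apply/setP => E; rewrite inE; apply/negP => /h [].
by rewrite subset0 => /eqP ->; rewrite cards0.
Qed.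
End Comb.


Lemma xA (a b cK cL c0 : xint) (f : int) : xle a (xaddz cK 2) -> xle b (xaddz cL 2) ->
  xle (xmin cK (xaddz cL (f - 1))) c0 -> xle (xmin a (xaddz b (f - 1))) (xaddz c0 2).
Proof. case: a => [a|]; case: b => [b|]; case: cK => [k|]; case: cL => [l|]; case: c0 => [z|] //=; lia. Qed.

Lemma xB (a b cK cL c0 : xint) (f : int) : xle (xaddz cK 2) a -> xle (xaddz cL 2) b ->
  xle (xaddz c0 (1 - f)) cL -> xle (xmin c0 (xaddz cL f)) cK ->
  xle (xaddz c0 2) (xmin a (xaddz b (f - 1))).
Proof. case: a => [a|]; case: b => [b|]; case: cK => [k|]; case: cL => [l|]; case: c0 => [z|] //=; lia. Qed.

Lemma xle_trans (a b c : xint) : xle a b -> xle b c -> xle a c.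
Proof. case: a => [a|]; case: b => [b|]; case: c => [c|] //=; lia. Qed.

Lemma xle_maxl (a b : xint) : xle a (xmax a b).
Proof. case: a => [a|]; case: b => [b|] //=; lia. Qed.
Lemma xle_maxr (a b : xint) : xle b (xmax a b).
Proof. case: a => [a|]; case: b => [b|] //=; lia. Qed.
Lemma xmax_le (a b x : xint) : xle a x -> xle b x -> xle (xmax a b) x.
Proof. case: a => [a|]; case: b => [b|]; case: x => [x|] //=; lia. Qed.
Lemma xle_anti (a b : xint) : xle a b -> xle b a -> a = b.
Proof. case: a => [a|]; case: b => [b|] //= h1 h2; congr Some; lia. Qed.

Section Psi.
Variable T : finType.
Implicit Types (V F : {set T}) (C : {set {set T}}).

Definition gf n V C F := xmin (psi_fuel n V (hdel C F))
   (xaddz (psi_fuel n (hcolonV V C F) (hcolonC C F)) (#|F|%:Z - 1)%R).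

Definition mfold (g : {set T} -> xint) F0 Fs := foldr (fun F acc => xmax (g F) acc) (g F0) Fs.

Lemma psi_fuelS n V C : psi_fuel n.+1 V C =
  if V == set0 then Some 0%R else if C == set0 then None else
  match enum C with [::] => None | F0 :: Fs => mfold (gf n V C) F0 Fs end.
Proof. by []. Qed.

Lemma pf_C0 k V : psi_fuel k V set0 = if V == set0 then Some 0%R else None.
Proof. by case: k => [|k] /=; rewrite eqxx; case: (V == set0). Qed.

Lemma pf_V0 k C : psi_fuel k set0 C = Some 0%R.
Proof. by case: k => [|k] /=; rewrite eqxx. Qed.

Lemma mfold_congr g1 g2 F0 Fs : (forall F, F \in F0 :: Fs -> g1 F = g2 F) ->
  mfold g1 F0 Fs = mfold g2 F0 Fs.
Proof.
rewrite /mfold; elim: Fs => [|F1 Fs IH] h /=; first by rewrite h // inE eqxx.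
rewrite h; last by rewrite !inE eqxx orbT.
by rewrite IH // => F hF; apply: h; rewrite !inE in hF *; case/orP: hF => ->; rewrite ?orbT.
Qed.

Lemma mfold_ge g F0 Fs F : F \in F0 :: Fs -> xle (g F) (mfold g F0 Fs).
Proof.
rewrite /mfold; elim: Fs F => [|F1 Fs IH] F /=.
  by rewrite inE => /eqP ->; apply: xle_refl.
rewrite !inE => /or3P [/eqP ->|/eqP ->|hF].
- by apply: xle_trans (xle_maxr _ _); apply: IH; rewrite inE eqxx.
- exact: xle_maxl.
- by apply: xle_trans (xle_maxr _ _); apply: IH; rewrite inE hF orbT.
Qed.

Lemma mfold_le g F0 Fs x : (forall F, F \in F0 :: Fs -> xle (g F) x) -> xle (mfold g F0 Fs) x.
Proof.
rewrite /mfold; elim: Fs => [|F1 Fs IH] h /=; first by apply: h; rewrite inE eqxx.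
apply: xmax_le; first by apply: h; rewrite !inE eqxx orbT.
by apply: IH => F; rewrite inE => /orP [/eqP ->|hF]; apply: h; rewrite !inE ?eqxx ?hF ?orbT.
Qed.

Lemma pf_stable n : forall m V C, #|C| <= n -> #|C| <= m -> psi_fuel n V C = psi_fuel m V C.
Proof.
have C0 C : #|C| <= 0 -> C = set0 by rewrite leqn0 cards_eq0 => /eqP.
elim: n => [|n IH] m V C hn hm.
  by rewrite (C0 C hn) !pf_C0.
case: m hm => [|m] hm; first by rewrite (C0 C hm) !pf_C0.
rewrite !psi_fuelS; case: (V == set0) => //; case: eqP => // /eqP CN.
case E: (enum C) => [|F0 Fs] //; apply: mfold_congr => F hF.
have FC : F \in C by rewrite -mem_enum E.
have h1 := card_del FC; have h2 := card_colon FC.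
rewrite /gf /hdel (IH m V (C :\ F)) ?(IH m (hcolonV V C F) (hcolonC C F)) //; lia.
Qed.

Definition gpsi V C F := xmin (psi V (hdel C F))
   (xaddz (psi (hcolonV V C F) (hcolonC C F)) (#|F|%:Z - 1)%R).

Lemma psi_split V C : V != set0 -> C != set0 -> exists F0 Fs,
  (forall F, (F \in C) = (F \in F0 :: Fs)) /\ psi V C = mfold (gpsi V C) F0 Fs.
Proof.
move=> VN CN; rewrite /psi.
have : 0 < #|C| by rewrite card_gt0.
case hc: #|C| => [//|n] _.
rewrite psi_fuelS (negbTE VN) (negbTE CN).
case E: (enum C) => [|F0 Fs].
  by case/set0Pn: CN => x; rewrite -mem_enum E.
exists F0, Fs; split; first by move=> F; rewrite -mem_enum E.
apply: mfold_congr => F hF.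
have FC : F \in C by rewrite -mem_enum E.
have h1 := card_del FC; have h2 := card_colon FC.
by rewrite /gf /gpsi /psi /hdel (@pf_stable n #|C :\ F| V (C :\ F)) ?(@pf_stable n #|hcolonC C F| (hcolonV V C F) (hcolonC C F)) //; lia.
Qed.

Lemma lemA n V C : #|C| <= n -> is_hypergraph V C ->
  xle (psi V C) (xaddz (conn_h (Ind V C)) 2%R).
Proof.
elim: n V C => [|n IH] V C hn hyp.
- have C0 : C = set0 by apply/eqP; rewrite -cards_eq0; lia.
  case: (eqVneq V set0) => [V0|VN].
    rewrite /psi V0 pf_V0; have := conn_ge2 (Ind set0 C).
    by case: (conn_h _) => [z|] //=; lia.
  rewrite /psi C0 pf_C0 (negbTE VN).
  have -> : conn_h (Ind V set0) = None.
    by case: (conn_h _) (proj2 (conn_geP _ None) (fun k _ => @simplex_vanish _ V k VN)).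
  by [].
case: (eqVneq V set0) => [V0|VN].
  rewrite /psi V0 pf_V0; have := conn_ge2 (Ind set0 C).
  by case: (conn_h _) => [z|] //=; lia.
case: (eqVneq C set0) => [C0|CN].
  rewrite /psi C0 pf_C0 (negbTE VN).
  have -> : conn_h (Ind V set0) = None.
    by case: (conn_h _) (proj2 (conn_geP _ None) (fun k _ => @simplex_vanish _ V k VN)).
  by [].
have [F0 [Fs [memC ->]]] := psi_split VN CN.
apply: mfold_le => F; rewrite -memC => FC.
have h1 := card_del FC; have h2 := card_colon FC.
have c1 : #|hdel C F| <= n by rewrite /hdel; lia.
have c2 : #|hcolonC C F| <= n by lia.
have IH1 := IH V (hdel C F) c1 (hyp_del F hyp).
have IH2 := IH _ _ c2 (hyp_colon F hyp).
rewrite Ind_colon // in IH2.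
have P := pairIx (K:=Ind V (C :\ F)) F (@downInd _ V (C :\ F)).
rewrite /hdel in IH1.
rewrite -Ind_del // in P.
exact: xA IH1 IH2 P.
Qed.

Lemma lemB V C : properly_splitted V C -> is_hypergraph V C ->
  xle (xaddz (conn_h (Ind V C)) 2%R) (psi V C).
Proof.
elim => {V C} [V|V C F FC hconn ps1 IH1 ps2 IH2] hyp.
  case: (eqVneq V set0) => [V0|VN].
    rewrite /psi V0 pf_V0; have := conn_le (@empty_nvanish T).
    by case: (conn_h _) => [z|] //=; lia.
  by rewrite /psi pf_C0 (negbTE VN); case: (xaddz _ _).
have [FV F2] := hyp.1 F FC.
have VN : V != set0.
  apply/set0Pn; have : 0 < #|F| by lia.
  rewrite card_gt0 => /set0Pn [x xF]; exists x; exact: (subsetP FV).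
have CN : C != set0 by apply/set0Pn; exists F.
have [F0 [Fs [memC ->]]] := psi_split VN CN.
have FC' : F \in F0 :: Fs by rewrite -memC.
apply: (xle_trans _ (mfold_ge (gpsi V C) FC')).
have {}IH1 := IH1 (hyp_del F hyp).
have {}IH2 := IH2 (hyp_colon F hyp).
rewrite Ind_colon // in IH2 hconn.
have P := pairIIx (K:=Ind V (C :\ F)) F (@downInd _ V (C :\ F)).
rewrite /hdel in IH1.
rewrite -Ind_del // in P.
exact: xB IH1 IH2 hconn P.
Qed.
End Psi.

Theorem theorem3p15 (T : finType) (V : {set T}) (C : {set {set T}}) :
  is_hypergraph V C ->
  properly_splitted V C ->
  psi V C = xaddz (conn_h (Ind V C)) 2%R.
Proof.
move=> hyp ps; apply: xle_anti; first exact: (lemA (leqnn _) hyp).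
exact: lemB.
Qed.
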